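(* Let $n\ge3$, $\zeta=2\pi/n$, $m\in\mathbb{Z}$, $a>0$, $V$ smooth. For $k\in\{1,\dots,n\}$ and $z\in\mathbb{C}^2$ let $T_kz=n^{-1/2}\big(e^{(ikI+mJ)\zeta}z,e^{2(ikI+mJ)\zeta}z,\dots,e^{n(ikI+mJ)\zeta}z\big)\in\mathbb{C}^{2n}$. Let $\alpha_k=4\cos(m\zeta)\sin^2(k\zeta/2)$ and $\beta_k=2\sin(m\zeta)\sin(k\zeta)$. Then the Hessian satisfies $D^2H(\mathbf{a}_m)T_kz=T_kB_kz$, where $B_k$ is the $2\times2$ matrix $B_k=\mathrm{diag}(2a^2V''(a^2)-\alpha_k,-\alpha_k)+iJ\beta_k$.
   Context: $J=\begin{pmatrix}0&-1\\1&0\end{pmatrix}$, $I$ the $2\times2$ identity. $\omega=4\sin^2(m\zeta/2)-V'(a^2)$ and $H(u)=\frac12\sum_{j=1}^n\{V(|u_j|^2)+\omega|u_j|^2-|u_{j+1}-u_j|^2\}$ for $u=(u_1,\dots,u_n)\in(\mathbb{R}^2)^n$, indices mod $n$ (the Hamiltonian of the DNLS lattice $i\dot q_j=V'(|q_j|^2)q_j+(q_{j+1}-q_j)+(q_{j-1}-q_j)$ in rotating coordinates $q_j=e^{i\omega t}u_j$). $\mathbf{a}_m=(a_1,\dots,a_n)$ with $a_j=ae^{jm\zeta J}e_1$. The real $2n\times2n$ matrix $D^2H(\mathbf{a}_m)$ acts complex-linearly on $\mathbb{C}^{2n}$. *)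

(* Defs.v *)
From HB Require Import structures.
From mathcomp Require Import all_boot all_order all_algebra.
From mathcomp Require Import all_classical all_reals.
From mathcomp Require Import topology normedtype derive trigo.
From mathcomp Require Import complex.
Unset Printing Implicit Defensive.
Import Order.TTheory GRing.Theory Num.Theory.
Import numFieldNormedType.Exports.
Local Open Scope ring_scope.
Local Open Scope complex_scope.

Section DNLS.
Context {R : realType}.

Definition smooth (V : R -> R) : Prop :=
  forall (k : nat) (x : R), derivable (derive1n k V) x 1.

Definition zeta (n : nat) : R := 2 * pi / n%:R.

Definition omega (V : R -> R) (n : nat) (m : int) (a : R) : R :=
  4 * (sin (m%:~R * zeta n / 2)) ^+ 2 - (derive1 V) (a ^+ 2).

(* A point u = (u_1,...,u_n) of (R^2)^n is stored as an n x 2 real matrix: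
   row j (j : 'I_n, 0-based) is u_{j+1}; indices mod n via ordS. *)
Definition sqn2 (v : 'rV[R]_2) : R := \sum_(c < 2) v 0 c ^+ 2.

Definition H (V : R -> R) (n : nat) (m : int) (a : R) (u : 'M[R]_(n, 2)) : R :=
  2^-1 * \sum_(j < n)
    (V (sqn2 (row j u)) + omega V n m a * sqn2 (row j u)
      - sqn2 (row (ordS j) u - row j u)).

(* rotation e^{theta J}, J = [[0,-1],[1,0]] *)
Definition rot (theta : R) : 'M[R]_2 :=
  \matrix_(i < 2, j < 2)
    (if (i == 0) && (j == 0) then cos theta
     else if (i == 0) then - sin theta
     else if (j == 0) then sin theta else cos theta).

Definition Jmx : 'M[R]_2 :=
  \matrix_(i < 2, j < 2)
    (if (i == 0) && (j == 0) then 0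
     else if (i == 0) then -1
     else if (j == 0) then 1 else 0).

(* the relative equilibrium a_m, with a_j = a e^{j m zeta J} e_1, row j <-> a_{j+1} *)
Definition am (n : nat) (m : int) (a : R) : 'M[R]_(n, 2) :=
  \matrix_(j < n, c < 2) (a *: rot ((j.+1)%:R * m%:~R * zeta n)) c 0.

(* Hessian of f : (R^2)^n -> R at u, as second partial derivatives; the
   coordinate index (j, c) is coordinate c of u_{j+1}. *)
Definition hess (n : nat) (f : 'M[R]_(n, 2) -> R) (u : 'M[R]_(n, 2))
  (p q : 'I_n * 'I_2) : R :=
  'D_(delta_mx p.1 p.2) ('D_(delta_mx q.1 q.2) f) u.

(* complex-linear action of the real 2n x 2n Hessian on C^{2n} = 'M[C]_(n,2) *)
Definition hess_act (n : nat) (f : 'M[R]_(n, 2) -> R) (u : 'M[R]_(n, 2))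
  (w : 'M[R[i]]_(n, 2)) : 'M[R[i]]_(n, 2) :=
  \matrix_(j < n, c < 2)
    \sum_(l < n) \sum_(d < 2) (hess n f u (j, c) (l, d))%:C * w l d.

Definition expi (theta : R) : R[i] := (cos theta +i* sin theta)%C.

Definition mxC (M : 'M[R]_2) : 'M[R[i]]_2 := map_mx (fun r => r%:C%C) M.

(* T_k z: block j+1 equals n^{-1/2} e^{(j+1)(ikI + mJ)zeta} z
   = n^{-1/2} e^{i (j+1) k zeta} e^{(j+1) m zeta J} z *)
Definition Tk (n : nat) (m : int) (k : nat) (z : 'cV[R[i]]_2) : 'M[R[i]]_(n, 2) :=
  \matrix_(j < n, c < 2)
    ((Num.sqrt (n%:R : R))^-1%:C%C * expi ((j.+1)%:R * k%:R * zeta n)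
      * (mxC (rot ((j.+1)%:R * m%:~R * zeta n)) *m z) c 0).

Definition alpha (n : nat) (m : int) (k : nat) : R :=
  4 * cos (m%:~R * zeta n) * (sin (k%:R * zeta n / 2)) ^+ 2.

Definition beta (n : nat) (m : int) (k : nat) : R :=
  2 * sin (m%:~R * zeta n) * sin (k%:R * zeta n).

Definition Bk (V : R -> R) (n : nat) (m : int) (a : R) (k : nat) : 'M[R[i]]_2 :=
  mxC (\matrix_(i < 2, j < 2)
         (if i == j then
            (if i == 0 then 2 * a ^+ 2 * (derive1n 2 V) (a ^+ 2) - alpha n m k
             else - alpha n m k)
          else 0))
  + ('i%C * (beta n m k)%:C%C) *: mxC Jmx.

End DNLS.

(* Main.v *)
Require Import Defs.
From HB Require Import structures.
From mathcomp Require Import all_boot all_order all_algebra.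
From mathcomp Require Import all_classical all_reals.
From mathcomp Require Import topology normedtype derive trigo.
From mathcomp Require Import complex ring.
Import Order.TTheory GRing.Theory Num.Theory.
Import numFieldNormedType.Exports.
Local Open Scope ring_scope.
Local Open Scope complex_scope.

Section S.
Context {R : realType}.

Lemma deriveE1 {V W : normedModType R} (f : V -> W) x v : 'D_v f x = 'D_1 (fun h : R => f (h *: v + x)) 0.
Proof.
rewrite /derive; set g1 := fun h => h^-1 *: _; set g2 := fun h => h^-1 *: _.
suff -> : g1 = g2 by [].
by rewrite funeqE /g1 /g2 => h /=; rewrite addr0 scale0r add0r [_%:A]mulr1.
Qed.

Lemma is_derive1P {V W : normedModType R} (f : V -> W) x v df :
  is_derive x v f df <-> is_derive (0:R) 1 (fun h : R => f (h *: v + x)) df.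
Proof.
split=> -[d1 d2]; split.
- by move/derivable1P: d1.
- by rewrite -deriveE1.
- by apply/derivable1P.
- by rewrite deriveE1.
Qed.

Lemma is_derive_comp1 {V : normedModType R} (F : R -> R) (g : V -> R) u v dg :
  is_derive u v g dg -> derivable F (g u) 1 ->
  is_derive u v (fun N => F (g N)) (derive1 F (g u) * dg).
Proof.
move=> H1 dF; have [d1 d2] := (proj1 (is_derive1P _ _ _ _) H1); apply/is_derive1P.
have e0 : g u = (fun h : R => g (h *: v + u)) 0 by rewrite /= scale0r add0r.
split.
- apply/derivable1_diffP; apply: (@differentiable_comp _ _ _ _ (fun h : R => g (h *: v + u)) F).
  + exact/derivable1_diffP.
  + by rewrite -e0; apply/derivable1_diffP.
- rewrite -derive1E.
  have -> : (fun h : R => F (g (h *: v + u))) = F \o (fun h : R => g (h *: v + u)) by [].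
  rewrite derive1_comp.
  + by rewrite !derive1E -e0 d2.
  + exact: d1.
  + by rewrite -e0.
Qed.


Section Wrap.
Context {V : normedModType R}.
Implicit Types (f g : V -> R) (x v : V).

Lemma isdM f g x v df dg : is_derive x v f df -> is_derive x v g dg ->
  is_derive x v (fun y => f y * g y) (f x * dg + g x * df).
Proof. by move=> H1 H2; have := is_deriveM H1 H2. Qed.

Lemma isdD f g x v df dg : is_derive x v f df -> is_derive x v g dg ->
  is_derive x v (fun y => f y + g y) (df + dg).
Proof. by move=> H1 H2; have := is_deriveD H1 H2. Qed.

Lemma isdB f g x v df dg : is_derive x v f df -> is_derive x v g dg ->
  is_derive x v (fun y => f y - g y) (df - dg).
Proof. by move=> H1 H2; have := is_deriveB H1 H2. Qed.

Lemma isdC (r : R) x v : is_derive x v (fun y : V => r) 0.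
Proof. exact: (is_derive_cst r). Qed.

Lemma isdS n (h : 'I_n -> V -> R) x v dh : (forall i, is_derive x v (h i) (dh i)) ->
  is_derive x v (fun y => \sum_(i < n) h i y) (\sum_(i < n) dh i).
Proof.
move=> H1; have := is_derive_sum H1.
have -> : (\sum_(i < n) h i) = (fun y => \sum_(i < n) h i y); last by [].
by apply: funext => y; rewrite fct_sumE.
Qed.

Lemma isd_ext f g x v df : f = g -> is_derive x v f df -> is_derive x v g df.
Proof. by move=> ->. Qed.
End Wrap.

Lemma is_derive_coord m k (u v : 'M[R]_(m, k)) j c :
  is_derive u v (fun N : 'M[R]_(m,k) => N j c) (v j c).
Proof.
apply/is_derive1P.
have -> : (fun h : R => (h *: v + u) j c) = (fun h => h * v j c + u j c).
  by apply: funext => h; rewrite !mxE.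
apply: is_derive_eq.
by rewrite scaler0 add0r addr0 [_%:A]mulr1.
Qed.

Lemma isdX {V : normedModType R} (f : V -> R) k x v df : is_derive x v f df ->
  is_derive x v (fun y => f y ^+ k) ((k%:R * f x ^+ k.-1) * df).
Proof. move=> H1; apply: isd_ext (is_deriveX k H1); by apply: funext => y; rewrite exprfctE. Qed.

Section Main.
Variables (n : nat) (m : int) (a : R) (Vf : R -> R).
Local Notation M := 'M[R]_(n, 2).
Local Notation om := (omega Vf n m a).

Definition sq (j : 'I_n) (u : M) : R := \sum_(c < 2) u j c ^+ 2.

Definition G1 (v u : M) : R :=
  \sum_(j < n) ((derive1 Vf (sq j u) + om) * (\sum_(c < 2) u j c * v j c)
     - \sum_(c < 2) (u (ordS j) c - u j c) * (v (ordS j) c - v j c)).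

Lemma H_E : H Vf n m a = fun u : M => 2^-1 * \sum_(j < n)
   (Vf (sq j u) + om * sq j u - \sum_(c < 2) (u (ordS j) c - u j c) ^+ 2).
Proof.
apply: funext => u; rewrite /H; congr (_ * _); apply: eq_bigr => j _.
rewrite /sqn2 /sq; congr (Vf _ + _ * _ - _); apply: eq_bigr => c _; by rewrite !mxE.
Qed.

Lemma isd_sq (u v : M) j : is_derive u v (sq j)
  (\sum_(c < 2) (2 * u j c) * v j c).
Proof.
rewrite /sq; apply: isdS => c.
apply: is_derive_eq; first apply: isdX; first exact: is_derive_coord.
by rewrite expr1.
Qed.

Lemma D1 (hV : forall x, derivable Vf x 1) (u v : M) :
  is_derive u v (H Vf n m a) (G1 v u).
Proof.
rewrite H_E; apply: is_derive_eq.
  apply: isdM.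
  apply: isdS => j; apply: isdB; first apply: isdD.
  - apply: is_derive_comp1; [exact: isd_sq | exact: hV].
  - apply: isdM; exact: isd_sq.
  - apply: isdS => c; apply: isdX; apply: isdB; exact: is_derive_coord.
rewrite /= mulr0 addr0 /G1 mulr_sumr; apply: eq_bigr => j _.
rewrite mulr0 addr0.
under eq_bigr do rewrite -mulrA.
under [X in _ - X]eq_bigr do rewrite expr1 -mulrA.
rewrite -!mulr_sumr.
by field.
Qed.

Definition G2 (w v u : M) : R :=
  \sum_(j < n) (derive1 (derive1 Vf) (sq j u) * (\sum_(c < 2) (2 * u j c) * w j c)
        * (\sum_(c < 2) u j c * v j c)
     + (derive1 Vf (sq j u) + om) * (\sum_(c < 2) w j c * v j c)
     - \sum_(c < 2) (w (ordS j) c - w j c) * (v (ordS j) c - v j c)).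

Lemma D2 (hV : forall x, derivable (derive1 Vf) x 1) (u v w : M) :
  is_derive u w (G1 v) (G2 w v u).
Proof.
have -> : G1 v = fun u : M => \sum_(j < n) ((derive1 Vf (sq j u) + om) * (\sum_(c < 2) u j c * v j c)
     - \sum_(c < 2) (u (ordS j) c - u j c) * (v (ordS j) c - v j c)) by [].
apply: is_derive_eq.
  apply: isdS => j; apply: isdB.
  - apply: isdM.
    + apply: isdD; first apply: is_derive_comp1; [exact: isd_sq | exact: hV].
    + apply: isdS => c; apply: isdM; exact: is_derive_coord.
  - apply: isdS => c; apply: isdM; apply: isdB; exact: is_derive_coord.
rewrite /G2; apply: eq_bigr => j _.
have -> : \sum_(i < 2) (u j i * 0 + v j i * w j i) = \sum_(c < 2) w j c * v j c.
  by apply: eq_bigr => c _; rewrite mulr0 add0r mulrC.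
have -> : \sum_(i < 2) ((u (ordS j) i - u j i) * 0 +
      (v (ordS j) i - v j i) * (w (ordS j) i - w j i)) =
    \sum_(c < 2) (w (ordS j) c - w j c) * (v (ordS j) c - v j c).
  by apply: eq_bigr => c _; rewrite mulr0 add0r mulrC.
by rewrite addr0; ring.
Qed.

Lemma hessE (hV0 : forall x, derivable Vf x 1)
  (hV1 : forall x, derivable (derive1 Vf) x 1) (u : M) p q :
  hess n (H Vf n m a) u p q = G2 (delta_mx p.1 p.2) (delta_mx q.1 q.2) u.
Proof.
rewrite /hess.
have -> : 'D_(delta_mx q.1 q.2) (H Vf n m a) = G1 (delta_mx q.1 q.2).
  apply: funext => x; exact: (@derive_val _ _ _ _ _ _ _ (D1 hV0 x _)).
exact: (@derive_val _ _ _ _ _ _ _ (D2 hV1 u _ _)).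
Qed.

Section Delta.
Variables (j0 : 'I_n) (c0 : 'I_2).
Local Notation dl := (delta_mx j0 c0 : M).

Lemma dsum_l j (f : 'I_2 -> R) :
  \sum_(c < 2) dl j c * f c = (j == j0)%:R * f c0.
Proof.
rewrite (bigD1 c0) //= big1 ?addr0 => [|c ne]; rewrite mxE.
  by rewrite eqxx andbT.
by rewrite (negbTE ne) andbF mul0r.
Qed.

Lemma dsum_r j (f : 'I_2 -> R) :
  \sum_(c < 2) f c * dl j c = (j == j0)%:R * f c0.
Proof. by rewrite -dsum_l; apply: eq_bigr => c _; rewrite mulrC. Qed.

Lemma jsum (g : 'I_n -> R) : \sum_(j < n) (j == j0)%:R * g j = g j0.
Proof.
rewrite (bigD1 j0) //= eqxx mul1r big1 ?addr0 // => j ne.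
by rewrite (negbTE ne) mul0r.
Qed.

Lemma jsumS (g : 'I_n -> R) :
  \sum_(j < n) (ordS j == j0)%:R * g j = g (ord_pred j0).
Proof.
rewrite (bigD1 (ord_pred j0)) //= ord_predK eqxx mul1r big1 ?addr0 // => j ne.
case: eqP => [e|_]; last by rewrite mul0r.
by move: ne; rewrite -e ordSK eqxx.
Qed.

Lemma G2_delta (v u : M) : G2 dl v u =
  derive1 (derive1 Vf) (sq j0 u) * (2 * u j0 c0) * (\sum_(c < 2) u j0 c * v j0 c)
  + (derive1 Vf (sq j0 u) + om) * v j0 c0
  + v (ordS j0) c0 - 2 * v j0 c0 + v (ord_pred j0) c0.
Proof.
rewrite /G2.
under eq_bigr => j _ do rewrite dsum_r dsum_l.
have E3 j : \sum_(c < 2) (dl (ordS j) c - dl j c) * (v (ordS j) c - v j c) =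
   (ordS j == j0)%:R * (v (ordS j) c0 - v j c0) - (j == j0)%:R * (v (ordS j) c0 - v j c0).
  rewrite -(dsum_l (ordS j) (fun c => v (ordS j) c - v j c)).
  rewrite -(dsum_l j (fun c => v (ordS j) c - v j c)) -sumrB.
  by apply: eq_bigr => c _; rewrite mulrBl.
under eq_bigr => j _ do rewrite E3.
rewrite (eq_bigr (fun j => (j == j0)%:R * (derive1 (derive1 Vf) (sq j u) * (2 * u j c0) *
      \sum_(c < 2) u j c * v j c + (derive1 Vf (sq j u) + om) * v j c0
      + (v (ordS j) c0 - v j c0)) + (ordS j == j0)%:R * (- (v (ordS j) c0 - v j c0)))); last first.
  by move=> j _; ring.
rewrite big_split /= jsum jsumS ord_predK.
ring.
Qed.
End Delta.

Lemma csum1 (x : R) i c (W : 'M[R[i]]_(n, 2)) :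
  \sum_(l < n) \sum_(d < 2) (x * (delta_mx l d : M) i c)%:C * W l d = x%:C * W i c.
Proof.
rewrite (bigD1 i) //= [X in _ + X]big1 ?addr0 => [|l nl]; last first.
  apply: big1 => d _.
  by rewrite mxE eq_sym (negbTE nl) /= mulr0 mul0r.
rewrite (bigD1 c) //= [X in _ + X]big1 ?addr0 => [|d nd]; last first.
  by rewrite mxE eqxx /= eq_sym (negbTE nd) mulr0 mul0r.
by rewrite mxE !eqxx mulr1.
Qed.

Lemma collapse (s : seq (R * 'I_n * 'I_2)) (W : 'M[R[i]]_(n, 2)) :
  \sum_(l < n) \sum_(d < 2)
     ((\sum_(t <- s) t.1.1 * (delta_mx l d : M) t.1.2 t.2)%:C * W l d)
  = \sum_(t <- s) t.1.1%:C * W t.1.2 t.2.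
Proof.
elim: s => [|t s IH].
  rewrite big_nil; apply: big1 => l _; apply: big1 => d _.
  by rewrite big_nil mul0r.
rewrite big_cons -IH -csum1 -big_split /=; apply: eq_bigr => l _.
rewrite -big_split /=; apply: eq_bigr => d _.
by rewrite big_cons rmorphD mulrDl.
Qed.

Lemma sum2 (T : nmodType) (F : 'I_2 -> T) : \sum_(c < 2) F c = F 0 + F 1.
Proof. by rewrite big_ord_recl big_ord1; congr (_ + F _); exact: val_inj. Qed.

Lemma hess_actE (hV0 : forall x, derivable Vf x 1)
  (hV1 : forall x, derivable (derive1 Vf) x 1) (u : M) (W : 'M[R[i]]_(n, 2)) j c :
  hess_act n (H Vf n m a) u W j c =
    (derive1 (derive1 Vf) (sq j u) * (2 * u j c) * u j 0)%:C * W j 0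
  + (derive1 (derive1 Vf) (sq j u) * (2 * u j c) * u j 1)%:C * W j 1
  + (derive1 Vf (sq j u) + om - 2)%:C * W j c
  + W (ordS j) c + W (ord_pred j) c.
Proof.
rewrite /hess_act mxE.
pose s := [:: (derive1 (derive1 Vf) (sq j u) * (2 * u j c) * u j 0, j, 0);
              (derive1 (derive1 Vf) (sq j u) * (2 * u j c) * u j 1, j, 1);
              (derive1 Vf (sq j u) + om - 2, j, c);
              (1, ordS j, c); (1, ord_pred j, c)].
rewrite (eq_bigr (fun l => \sum_(d < 2)
     ((\sum_(t <- s) t.1.1 * (delta_mx l d : M) t.1.2 t.2)%:C * W l d))).
  by rewrite collapse /s !big_cons big_nil addr0 !rmorph1 !mul1r !addrA.
move=> l _; apply: eq_bigr => d _; congr (_%:C * _).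
rewrite hessE //= G2_delta /s !big_cons big_nil sum2.
rewrite /= !addr0. ring.
Qed.
End Main.

Lemma trig_int (f : R -> R) : periodic f (pi *+ 2) ->
  forall x (t : int), f (x + t%:~R * (pi *+ 2)) = f x.
Proof.
move=> hf x [p|p].
  have -> : (Posz p)%:~R = p%:R :> R by [].
  by rewrite mulr_natl (periodicn hf).
rewrite NegzE mulNr.

by rewrite mulr_natl -[in RHS](subrK ((pi *+ 2) *+ p.+1) x) (periodicn hf).
Qed.

Lemma zetaE (n : nat) : (0 < n)%N -> n%:R * zeta n = pi *+ 2 :> R.
Proof.
move=> hn; rewrite /zeta mulr2n.
have hn' : (n%:R : R) != 0 by rewrite pnatr_eq0 -lt0n.
by field.
Qed.

Lemma perS (n : nat) (f : R -> R) (hf : periodic f (pi *+ 2)) (y : R) (t : int)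
  (hy : y = t%:~R) (hn : (0 < n)%N) (j : 'I_n) :
  f (((ordS j).+1)%:R * y * zeta n) = f ((j.+1)%:R * y * zeta n + y * zeta n).
Proof.
rewrite /=; move: (ltn_ord j); rewrite leq_eqVlt => /orP [/eqP e|lt].
  rewrite e modnn.
  rewrite (_ : (n%:R * y * zeta n + y * zeta n) = y * zeta n + t%:~R * (pi *+ 2)).
    by rewrite trig_int // mul1r.
  by rewrite -(zetaE _ hn) -hy; ring.
by rewrite modn_small // -[(j.+2)]addn1 natrD; congr f; ring.
Qed.

Lemma perP (n : nat) (f : R -> R) (hf : periodic f (pi *+ 2)) (y : R) (t : int)
  (hy : y = t%:~R) (hn : (0 < n)%N) (j : 'I_n) :
  f (((ord_pred j).+1)%:R * y * zeta n) = f ((j.+1)%:R * y * zeta n - y * zeta n).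
Proof.
rewrite /=; case: j => [[|i] hi] /=.
  rewrite add0n modn_small ?prednK // ?prednK ?leqnn //.
  rewrite mul1r subrr -[in RHS](trig_int _ hf 0 t) add0r -(zetaE _ hn) hy; congr f; ring.
rewrite modnDr modn_small; last exact: ltnW.
by rewrite -[(i.+2)]addn1 natrD; congr f; ring.
Qed.

Lemma expiE (x : R) : expi x = (cos x)%:C + 'i%C * (sin x)%:C :> R[i].
Proof. by apply/eqP; rewrite eq_complex /=; apply/andP; split; apply/eqP; ring. Qed.

Lemma expiD (x y : R) : expi (x + y) = expi x * expi y :> R[i].
Proof.
by apply/eqP; rewrite /expi eq_complex /= cosD sinD; apply/andP; split; apply/eqP; ring.
Qed.

Lemma rotz0 (x : R) (z : 'cV[R[i]]_2) :
  (mxC (Defs.rot x) *m z) 0 0 = (cos x)%:C * z 0 0 - (sin x)%:C * z 1 0.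
Proof. by rewrite mxE sum2 !mxE /= rmorphN mulNr. Qed.

Lemma rotz1 (x : R) (z : 'cV[R[i]]_2) :
  (mxC (Defs.rot x) *m z) 1 0 = (sin x)%:C * z 0 0 + (cos x)%:C * z 1 0.
Proof. by rewrite mxE sum2 !mxE. Qed.

Lemma am0 n m (a : R) (j : 'I_n) : am n m a j 0 = a * cos ((j.+1)%:R * m%:~R * zeta n).
Proof. by rewrite !mxE. Qed.

Lemma am1 n m (a : R) (j : 'I_n) : am n m a j 1 = a * sin ((j.+1)%:R * m%:~R * zeta n).
Proof. by rewrite !mxE. Qed.

Lemma sq_am n m (a : R) (j : 'I_n) : sq _ j (am n m a) = a ^+ 2.
Proof. by rewrite /sq sum2 am0 am1 !exprMn -mulrDr cos2Dsin2 mulr1. Qed.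

Lemma Bkz0 Vf n m (a : R) k (z : 'cV[R[i]]_2) :
  (Bk Vf n m a k *m z) 0 0 =
  (2 * a ^+ 2 * derive1n 2 Vf (a ^+ 2) - alpha n m k)%:C * z 0 0
  - 'i%C * (beta n m k)%:C * z 1 0.
Proof. rewrite mxE sum2 !mxE /=. have [d ->] : exists d : R, derive1 (derive1 Vf) (a ^+ 2) = d by eexists. set z0 := z 0 0. set z1 := z 1 0. ring. Qed.

Lemma Bkz1 Vf n m (a : R) k (z : 'cV[R[i]]_2) :
  (Bk Vf n m a k *m z) 1 0 =
  'i%C * (beta n m k)%:C * z 0 0 - (alpha n m k)%:C * z 1 0.
Proof. rewrite mxE sum2 !mxE /=. set z0 := z 0 0. set z1 := z 1 0. ring. Qed.
End S.

Lemma half_sin2 (R : realType) (x : R) : sin (x / 2) ^+ 2 = (1 - cos x) / 2.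
Proof.
have -> : cos x = cos (x / 2 + x / 2) by congr cos; field.
by rewrite cosD -!expr2 cos2sin2; field.
Qed.

Lemma TkE (R : realType) n m k (z : 'cV[R[i]]_2) r c :
  Tk n m k z r c = (Num.sqrt (n%:R : R))^-1%:C * expi ((r.+1)%:R * k%:R * zeta n)
      * (mxC (Defs.rot ((r.+1)%:R * m%:~R * zeta n)) *m z) c 0.
Proof. by rewrite mxE. Qed.

Lemma expiS (R : realType) n k (hn : (0 < n)%N) (j : 'I_n) :
  expi (((ordS j).+1)%:R * k%:R * zeta n) =
  expi ((j.+1)%:R * k%:R * zeta n) * expi (k%:R * zeta n) :> R[i].
Proof.
rewrite -expiD /expi (perS n cos (@cosD2pi R) (k%:R) (k%:Z) erefl hn j).
by rewrite (perS n sin (@sinD2pi R) (k%:R) (k%:Z) erefl hn j).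
Qed.

Lemma expiP (R : realType) n k (hn : (0 < n)%N) (j : 'I_n) :
  expi (((ord_pred j).+1)%:R * k%:R * zeta n) =
  expi ((j.+1)%:R * k%:R * zeta n) * expi (- (k%:R * zeta n)) :> R[i].
Proof.
rewrite -expiD /expi (perP n cos (@cosD2pi R) (k%:R) (k%:Z) erefl hn j).
by rewrite (perP n sin (@sinD2pi R) (k%:R) (k%:Z) erefl hn j).
Qed.

Lemma rotS (R : realType) n (m : int) (hn : (0 < n)%N) (j : 'I_n) :
  Defs.rot (((ordS j).+1)%:R * m%:~R * zeta n) =
  Defs.rot ((j.+1)%:R * m%:~R * zeta n + m%:~R * zeta n) :> 'M[R]_2.
Proof.
rewrite /Defs.rot (perS n cos (@cosD2pi R) (m%:~R) m erefl hn j).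
by rewrite (perS n sin (@sinD2pi R) (m%:~R) m erefl hn j).
Qed.

Lemma rotP (R : realType) n (m : int) (hn : (0 < n)%N) (j : 'I_n) :
  Defs.rot (((ord_pred j).+1)%:R * m%:~R * zeta n) =
  Defs.rot ((j.+1)%:R * m%:~R * zeta n - m%:~R * zeta n) :> 'M[R]_2.
Proof.
rewrite /Defs.rot (perP n cos (@cosD2pi R) (m%:~R) m erefl hn j).
by rewrite (perP n sin (@sinD2pi R) (m%:~R) m erefl hn j).
Qed.

Theorem proposition1 (R : realType) (n : nat) (m : int) (a : R) (V : R -> R)
  (k : nat) (z : 'cV[R[i]]_2) :
  (3 <= n)%N -> 0 < a -> smooth V -> (1 <= k <= n)%N ->
  hess_act n (H V n m a) (am n m a) (Tk n m k z) = Tk n m k (Bk V n m a k *m z).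
Proof.
move=> hn3 ha hV hk.
have hn : (0 < n)%N by apply: leq_trans hn3.
have hV0 : forall x, derivable V x 1 by move=> x; exact: (hV 0%N x).
have hV1 : forall x, derivable (derive1 V) x 1 by move=> x; exact: (hV 1%N x).
apply/matrixP => j c.
rewrite hess_actE // sq_am !TkE expiS // expiP // rotS // rotP //.
have e2 : derive1n 2 V = derive1 (derive1 V) by [].
have [->|->] : c = 0 \/ c = 1.
- by case: c => [[|[|//]]] Hc; [left|right]; apply: val_inj.
- rewrite !rotz0 !rotz1 Bkz0 Bkz1 !am0 !am1.
  rewrite e2 /omega /alpha /beta !half_sin2 !cosD !sinD cosN sinN.
  rewrite (expiE (k%:R * zeta n)) (expiE (- (k%:R * zeta n))) cosN sinN.
  set E := expi _.
  set C := cos ((j.+1)%:R * m%:~R * zeta n). set Sn := sin ((j.+1)%:R * m%:~R * zeta n).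
  set cm := cos (m%:~R * zeta n). set sm := sin (m%:~R * zeta n).
  set ck := cos (k%:R * zeta n). set sk := sin (k%:R * zeta n).
  set z0 : R[i] := z 0 0. set z1 : R[i] := z 1 0.
  set s0 := (Num.sqrt _)^-1.
  have [D2 ->] : exists D : R, derive1 (derive1 V) (a ^+ 2) = D by eexists.
  have [D1 ->] : exists D : R, derive1 V (a ^+ 2) = D by eexists.
  have h4 : forall x : R, 4 * (x / 2) = 2 * x by move=> x; field.
  have h4' : forall x y : R, 4 * y * (x / 2) = 2 * y * x by move=> x y; field.
  rewrite !h4 !h4'.
  apply/eqP; rewrite -subr_eq0; apply/eqP.
  rewrite (_ : _ - _ = (C ^+ 2 + Sn ^+ 2 - 1)%:C * ((2 * D2 * a ^+ 2 * C)%:C * s0%:C * E * z0)).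
    by rewrite /C /Sn cos2Dsin2 subrr mul0r.
  ring.
- rewrite !rotz0 !rotz1 Bkz0 Bkz1 !am0 !am1.
  rewrite e2 /omega /alpha /beta !half_sin2 !cosD !sinD cosN sinN.
  rewrite (expiE (k%:R * zeta n)) (expiE (- (k%:R * zeta n))) cosN sinN.
  set E := expi _.
  set C := cos ((j.+1)%:R * m%:~R * zeta n). set Sn := sin ((j.+1)%:R * m%:~R * zeta n).
  set cm := cos (m%:~R * zeta n). set sm := sin (m%:~R * zeta n).
  set ck := cos (k%:R * zeta n). set sk := sin (k%:R * zeta n).
  set z0 : R[i] := z 0 0. set z1 : R[i] := z 1 0.
  set s0 := (Num.sqrt _)^-1.
  have [D2 ->] : exists D : R, derive1 (derive1 V) (a ^+ 2) = D by eexists.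
  have [D1 ->] : exists D : R, derive1 V (a ^+ 2) = D by eexists.
  have h4 : forall x : R, 4 * (x / 2) = 2 * x by move=> x; field.
  have h4' : forall x y : R, 4 * y * (x / 2) = 2 * y * x by move=> x y; field.
  rewrite !h4 !h4'.
  apply/eqP; rewrite -subr_eq0; apply/eqP.
  rewrite (_ : _ - _ = (C ^+ 2 + Sn ^+ 2 - 1)%:C * ((2 * D2 * a ^+ 2 * Sn)%:C * s0%:C * E * z0)).
    by rewrite /C /Sn cos2Dsin2 subrr mul0r.
  ring.
Qed.
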